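(* Given any three spin-decorated horospheres $(\mathfrak{h}_n,W_n)$ in $\mathcal{H}^4$, $n=1,2,3$, let $\lambda_{mn}$ denote the lambda length from $(\mathfrak{h}_m,W_m)$ to $(\mathfrak{h}_n,W_n)$. Then $\lambda_{12}\lambda_{32}^{-1}\lambda_{31}\in\mathcal{V}\cup\{\infty\}$, where $\mathcal{V}=\mathrm{span}_\mathbb{R}\{1,i,j\}\subset\mathbb{H}$.
   Context: $\mathcal{H}^4$ is oriented hyperbolic 4-space (in the upper half-space model $(\partial_w,\partial_x,\partial_y,\partial_z)$ is positive). A horosphere is $\{x\in\mathcal{H}^4:\langle x,p\rangle=1\}$ in the hyperboloid model, $p$ future lightlike. A decoration on a horosphere is a pair of perpendicular, parallel, oriented tangent line fields with unit fields $v^i,v^j$; with inward normal $N^{in}$ (away from the centre) and outward normal $N^{out}=-N^{in}$ the inward/outward frame fields are the oriented orthonormal frames $(v^{1,in},v^i,v^j,N^{in})$, $(v^{1,out},v^i,v^j,N^{out})$. A spin decoration is a pair $(W^{in},W^{out})$ of continuous lifts of these to the spin double cover of the frame bundle, $W^{in}$ being obtained from $W^{out}$ by rotation through $\pi$ in the plane orthogonal to $v^i,v^j$ from $N^{out}$ towards $v^{1,out}$. Lambda length from $(\mathfrak{h}_1,W_1)$ to $(\mathfrak{h}_2,W_2)$: $0$ if the centres coincide; otherwise with $\gamma$ the oriented geodesic from the centre of $\mathfrak{h}_1$ to that of $\mathfrak{h}_2$ and $p_m=\gamma\cap\mathfrak{h}_m$, translate $W_1^{in}(p_1)$ along $\gamma$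 by signed distance $\rho$ and then rotate by $\theta\in\mathbb{R}/4\pi\mathbb{Z}$ in the 3-plane orthogonal to $\gamma$ at $p_2$ (oriented so that a basis followed by the tangent of $\gamma$ is positive; right-handed angle) about the axis directed by a unit vector whose coordinates $v\in\mathcal{V}$ are taken w.r.t. the first three frame vectors identified with $1,i,j$, to reach $W_2^{out}(p_2)$; then $\lambda_{12}=\exp((\rho+\theta vk)/2)$. *)

(* Defs.v *)
From HB Require Import structures.
From mathcomp Require Import all_boot all_order all_algebra.
From mathcomp Require Import all_classical all_reals all_analysis.
Set Implicit Arguments. Unset Strict Implicit. Unset Printing Implicit Defensive.
Import Order.TTheory GRing.Theory Num.Theory.
Import numFieldNormedType.Exports.
Local Open Scope classical_set_scope.
Local Open Scope ring_scope.

Section HorosphereDefs.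
Variable R : realType.

Record quat := Quat { qr : R; qi : R; qj : R; qk : R }.
Definition qzero : quat := Quat 0 0 0 0.
Definition qmul (p q : quat) : quat :=
  Quat (qr p * qr q - qi p * qi q - qj p * qj q - qk p * qk q)
       (qr p * qi q + qi p * qr q + qj p * qk q - qk p * qj q)
       (qr p * qj q - qi p * qk q + qj p * qr q + qk p * qi q)
       (qr p * qk q + qi p * qj q - qj p * qi q + qk p * qr q).
Definition qinv (q : quat) : quat :=
  let n := qr q ^+ 2 + qi q ^+ 2 + qj q ^+ 2 + qk q ^+ 2 in
  Quat (qr q / n) (- qi q / n) (- qj q / n) (- qk q / n).
Definition inV (q : quat) : Prop := qk q = 0.

Definition vec := 'rV[R]_5.
Definition frm := 'M[R]_5.
Definition co (x : vec) (k : nat) : R := x ord0 (inord k).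
Definition mink (x y : vec) : R :=
  co x 0 * co y 0 - \sum_(1 <= k < 5) co x k * co y k.
Definition hyp (x : vec) : Prop := mink x x = 1 /\ 0 < co x 0.
Definition future_lightlike (p : vec) : Prop := mink p p = 0 /\ 0 < co p 0.
Definition horosphere (p : vec) : set vec := [set x | hyp x /\ mink x p = 1].
Definition tangent_h (p x w : vec) : Prop := mink w x = 0 /\ mink w p = 0.

(* ---------- oriented orthonormal frames (rows: point, e1, e2, e3, e4) ---------- *)
Definition eta (i j : nat) : R := if i == j then (if i == 0%N then 1 else -1) else 0.
Definition rowv (M : frm) (k : nat) : vec := row (inord k) M.
Definition Fr : set frm := [set M |
  (forall i j, (i < 5)%N -> (j < 5)%N -> mink (rowv M i) (rowv M j) = eta i j)
  /\ 0 < co (rowv M 0) 0 /\ 0 < \det M].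
Definition mkframe (x e1 e2 e3 e4 : vec) : frm :=
  \matrix_(i < 5, j < 5) (nth x [:: x; e1; e2; e3; e4] i) ord0 j.
Definition mapframe (f : vec -> vec) (M : frm) : frm :=
  \matrix_(i < 5, j < 5) (f (row i M)) ord0 j.

Definition I01 : set R := [set t | 0 <= t <= 1].
Definition fpath (c : R -> frm) : Prop :=
  (forall t, I01 t -> Fr (c t)) /\
  (forall i j, {within I01, continuous (fun t => c t i j)}).
Definition pconcat (c d : R -> frm) : R -> frm :=
  fun t => if t <= 2^-1 then c (2 * t) else d (2 * t - 1).
Definition homotopic (c d : R -> frm) : Prop :=
  exists H : R -> R -> frm,
    (forall s t, I01 s -> I01 t -> Fr (H s t)) /\
    (forall i j, {within [set st : R * R | I01 st.1 /\ I01 st.2],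
                  continuous (fun st => H st.1 st.2 i j)}) /\
    (forall t, I01 t -> H 0 t = c t /\ H 1 t = d t) /\
    (forall s, I01 s -> H s 0 = c 0 /\ H s 1 = c 1).
(* A point of the spin double cover (= universal cover of the frame bundle,
   based at the identity frame 1%:M) over a frame M is represented by a path
   c of frames from 1%:M to M, up to homotopy rel endpoints. *)

Definition parallel (p : vec) (v : vec -> vec) : Prop :=
  forall c : R -> vec,
    (forall t, horosphere p (c t)) ->
    (forall t (k : 'I_5), derivable (fun s => co (c s) k) t 1) ->
    forall t,
      (forall k : 'I_5, derivable (fun s => co (v (c s)) k) t 1) /\
      (forall w, tangent_h p (c t) w ->
         mink (\row_(k < 5) derive1 (fun s => co (v (c s)) k) t) w = 0).

Record sdh := SDH {
  centre : vec;
  vi : vec -> vec;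
  vj : vec -> vec;
  v1 : vec -> vec;
  wout : vec -> R -> frm
}.
Definition Nout (D : sdh) (x : vec) : vec := centre D - x.
Definition Nin (D : sdh) (x : vec) : vec := x - centre D.
Definition Fout (D : sdh) (x : vec) : frm :=
  mkframe x (v1 D x) (vi D x) (vj D x) (Nout D x).
Definition Fin (D : sdh) (x : vec) : frm :=
  mkframe x (- v1 D x) (vi D x) (vj D x) (Nin D x).
Definition rotpi (D : sdh) (x : vec) : R -> frm := fun t =>
  mkframe x (cos (pi * t) *: v1 D x - sin (pi * t) *: Nout D x) (vi D x) (vj D x)
            (cos (pi * t) *: Nout D x + sin (pi * t) *: v1 D x).
Definition win (D : sdh) (x : vec) : R -> frm := pconcat (wout D x) (rotpi D x).

Definition is_sdh (D : sdh) : Prop :=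
  let h := horosphere (centre D) in
  future_lightlike (centre D) /\
  (forall x, h x ->
     tangent_h (centre D) x (vi D x) /\ tangent_h (centre D) x (vj D x) /\
     mink (vi D x) (vi D x) = -1 /\ mink (vj D x) (vj D x) = -1 /\
     mink (vi D x) (vj D x) = 0) /\
  parallel (centre D) (vi D) /\ parallel (centre D) (vj D) /\
  (forall x, h x -> Fr (Fout D x)) /\
  (forall x, h x -> fpath (wout D x) /\ wout D x 0 = 1%:M /\ wout D x 1 = Fout D x) /\
  (* continuity of the lift W^out *)
  (forall sg : R -> vec, (forall t, I01 t -> h (sg t)) ->
     (forall k : 'I_5, {within I01, continuous (fun t => co (sg t) k)}) ->
     homotopic (pconcat (wout D (sg 0)) (fun t => Fout D (sg t))) (wout D (sg 1))).

Definition same_centre (p q : vec) : Prop := exists a : R, 0 < a /\ q = a *: p.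
Definition on_geod (p1 p2 x : vec) : Prop := hyp x /\ exists a b : R, x = a *: p1 + b *: p2.
(* hyperbolic translation by signed distance s along the geodesic from [p1] to [p2] *)
Definition Lmap (p1 p2 : vec) (s : R) (w : vec) : vec :=
  w + ((expR (- s) - 1) * mink w p2 / mink p1 p2) *: p1
    + ((expR s - 1) * mink w p1 / mink p1 p2) *: p2.
Definition transl_path (p1 p2 : vec) (rho : R) (M : frm) : R -> frm :=
  fun t => mapframe (Lmap p1 p2 (t * rho)) M.
Definition crossmx (v : 'rV[R]_3) : 'M[R]_3 :=
  \matrix_(a < 3, b < 3)
   (let x := v ord0 (inord 0) in let y := v ord0 (inord 1) in let z := v ord0 (inord 2) in
    match nat_of_ord a, nat_of_ord b with
    | 0, 1 => - z | 0, 2 => y | 1, 0 => z | 1, 2 => - x | 2, 0 => - y | 2, 1 => x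
    | _, _ => 0 end).
Definition rodrigues (th : R) (v : 'rV[R]_3) : 'M[R]_3 :=
  cos th *: 1%:M + sin th *: crossmx v + (1 - cos th) *: (v^T *m v).
(* rotate frame vectors e1,e2,e3 by Q (coordinates w.r.t. e1,e2,e3) *)
Definition rotframe (Q : 'M[R]_3) (M : frm) : frm :=
  \matrix_(i < 5, j < 5)
    (if (0 < i < 4)%N then \sum_(b < 3) Q b (inord i.-1) * M (inord b.+1) j else M i j).
Definition rot_path (th : R) (v : 'rV[R]_3) (M : frm) : R -> frm :=
  fun t => rotframe (rodrigues (t * th) v) M.
Definition unit3 (v : 'rV[R]_3) : Prop := \sum_(a < 3) v ord0 a ^+ 2 = 1.
(* exp((rho + th v k)/2), v = v_0 + v_1 i + v_2 j, so v k = v_2 i - v_1 j + v_0 k *)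
Definition lam (rho th : R) (v : 'rV[R]_3) : quat :=
  let e := expR (rho / 2) in let c := cos (th / 2) in let s := sin (th / 2) in
  Quat (e * c) (e * s * v ord0 (inord 2)) (- (e * s * v ord0 (inord 1)))
       (e * s * v ord0 (inord 0)).

Definition is_lambda (D1 D2 : sdh) (l : quat) : Prop :=
  let p1 := centre D1 in let p2 := centre D2 in
  (same_centre p1 p2 /\ l = qzero) \/
  (~ same_centre p1 p2 /\
   exists (q1 q2 : vec) (rho th : R) (v : 'rV[R]_3),
     on_geod p1 p2 q1 /\ horosphere p1 q1 /\
     on_geod p1 p2 q2 /\ horosphere p2 q2 /\ unit3 v /\
     homotopic
       (pconcat (pconcat (win D1 q1) (transl_path p1 p2 rho (Fin D1 q1)))
                (rot_path th v (mapframe (Lmap p1 p2 rho) (Fin D1 q1))))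
       (wout D2 q2) /\
     l = lam rho th v).

End HorosphereDefs.

(* Main.v *)
Require Import Defs.
From mathcomp Require Import all_boot all_order all_algebra.
From mathcomp Require Import all_classical all_reals all_analysis.
From HB Require Import structures.
From mathcomp Require Import ring lra zify perm fingroup.
Set Implicit Arguments. Unset Strict Implicit. Unset Printing Implicit Defensive.
Import Order.TTheory GRing.Theory Num.Theory.
Import numFieldNormedType.Exports.
Local Open Scope ring_scope.

Section S_T1.
Variable R : realType.
Implicit Types x y z : vec R.

Lemma minkE x y : mink x y = co x 0 * co y 0 - co x 1 * co y 1 - co x 2 * co y 2
   - co x 3 * co y 3 - co x 4 * co y 4.
Proof.
rewrite /mink big_ltn // big_ltn // big_ltn // big_ltn // big_geq //. ring.
Qed.

Lemma coD x y k : co (x + y) k = co x k + co y k.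
Proof. by rewrite /co mxE. Qed.
Lemma coZ a x k : co (a *: x) k = a * co x k.
Proof. by rewrite /co mxE. Qed.
Lemma coN x k : co (- x) k = - co x k.
Proof. by rewrite /co mxE. Qed.
Lemma coB x y k : co (x - y) k = co x k - co y k.
Proof. by rewrite /co !mxE. Qed.

Lemma minkC x y : mink x y = mink y x.
Proof. rewrite !minkE; ring. Qed.
Lemma minkDl x y z : mink (x + y) z = mink x z + mink y z.
Proof. rewrite !minkE !coD; ring. Qed.
Lemma minkZl a x z : mink (a *: x) z = a * mink x z.
Proof. rewrite !minkE !coZ; ring. Qed.
Lemma minkBl x y z : mink (x - y) z = mink x z - mink y z.
Proof. rewrite !minkE !coB; ring. Qed.
Lemma minkNl x z : mink (- x) z = - mink x z.
Proof. rewrite !minkE !coN; ring. Qed.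
Lemma sum5 (V : nmodType) (F : 'I_5 -> V) : \sum_(i < 5) F i =
  F (inord 0) + F (inord 1) + F (inord 2) + F (inord 3) + F (inord 4).
Proof.
rewrite !big_ord_recl big_ord0 addr0 !addrA.
by congr (_ + _ + _ + _ + _); congr F; apply/val_inj; rewrite /= inordK.
Qed.
Lemma prod5 (F : 'I_5 -> R) : \prod_(i < 5) F i =
  F (inord 0) * F (inord 1) * F (inord 2) * F (inord 3) * F (inord 4).
Proof.
rewrite !big_ord_recl big_ord0 mulr1 !mulrA.
by congr (_ * _ * _ * _ * _); congr F; apply/val_inj; rewrite /= inordK.
Qed.
End S_T1.

Section S_T2.
Variable R : realType.
Implicit Types x y z : vec R.

Definition Jm : 'M[R]_5 := \matrix_(i < 5, j < 5) Defs.eta R i j.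

Lemma JmE (i j : nat) : (i < 5)%N -> (j < 5)%N -> Jm (inord i) (inord j) = Defs.eta R i j.
Proof. by move=> hi hj; rewrite mxE !inordK. Qed.

Lemma Jm_ent (i j : nat) : (i < 5)%N -> (j < 5)%N -> Jm (inord i) (inord j) = Defs.eta R i j.
Proof. by move=> hi hj; rewrite mxE !inordK. Qed.

Ltac jsimp := rewrite ?mxE ?inordK // /Defs.eta /=.

Lemma mink_mx x y : mink x y = (x *m Jm *m y^T) ord0 ord0.
Proof.
rewrite minkE !mxE sum5 !mxE !sum5; jsimp; rewrite /co; ring.
Qed.

Lemma rowvE (M : frm R) k j : co (rowv M k) j = M (inord k) (inord j).
Proof. by rewrite /co /rowv mxE. Qed.

Lemma JJ : Jm *m Jm = 1%:M.
Proof.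
apply/matrixP=> i j; rewrite !mxE sum5 !mxE !inordK //.
case: i => [[|[|[|[|[|i]]]]] hi] //; case: j => [[|[|[|[|[|j]]]]] hj] //;
  rewrite /Defs.eta /=; ring.
Qed.

Lemma frame_ortho (M : frm R) : Fr M -> M *m Jm *m M^T = Jm.
Proof.
case=> H _; apply/matrixP=> i j.
rewrite [RHS]mxE -(H i j (ltn_ord i) (ltn_ord j)) minkE !rowvE !inord_val.
do 4 rewrite ?mxE ?sum5; jsimp; ring.
Qed.

Lemma frame_inv (M : frm R) : Fr M -> Jm *m M^T *m Jm *m M = 1%:M.
Proof.
move=> F; apply: mulmx1C.
by rewrite !mulmxA (frame_ortho F) JJ.
Qed.

Lemma mink_row (M : frm R) y k : (k < 5)%N -> mink y (rowv M k) = (y *m Jm *m M^T) ord0 (inord k).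
Proof.
move=> hk; rewrite minkE !rowvE !mxE sum5 !mxE !sum5; jsimp; rewrite /co; ring.
Qed.

Lemma frame_recon (M : frm R) y j : Fr M -> (j < 5)%N ->
  co y j = mink y (rowv M 0) * M (inord 0) (inord j) - mink y (rowv M 1) * M (inord 1) (inord j)
    - mink y (rowv M 2) * M (inord 2) (inord j) - mink y (rowv M 3) * M (inord 3) (inord j)
    - mink y (rowv M 4) * M (inord 4) (inord j).
Proof.
move=> F hj.
have E : y *m (Jm *m M^T *m Jm *m M) = y by rewrite frame_inv // mulmx1.
rewrite !mink_row // {1}/co -{1}E !mulmxA.
do 5 rewrite ?mxE ?sum5. rewrite !inordK // /Defs.eta /=.
ring.
Qed.
End S_T2.

Section S_T4.
Variable R : realType.

Definition mk5 (l : seq (seq R)) : 'M[R]_5 := \matrix_(i < 5, j < 5) nth 0 (nth [::] l i) j.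

Lemma tperm04 (r : nat) : (r < 5)%N ->
  tperm (inord 0 : 'I_5) (inord 4) (inord r) = inord (if r == 0%N then 4%N else if r == 4%N then 0%N else r).
Proof.
move=> hr; apply/val_inj; rewrite permE /= -!(inj_eq val_inj) /=.
by case: r hr => [|[|[|[|[|r]]]]] //= _; rewrite !inordK.
Qed.

Lemma detKc (k0 k1 k2 k3 a b al be : R) :
  \det (mk5 [:: [:: k0; k1; k2; k3; k0 - 1]; [:: a; b; 0; 0; a]; [:: al; 0; 1; 0; al];
               [:: be; 0; 0; 1; be]; [:: 1 - k0; -k1; -k2; -k3; 2 - k0]]) = b.
Proof.
set T := mk5 [:: [:: 1; 0; 0; 0; 0]; [:: a; b; 0; 0; 0]; [:: al; 0; 1; 0; 0];
               [:: be; 0; 0; 1; 0]; [:: k0; k1; k2; k3; -1]].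
set L := mk5 [:: [:: 1; 0; 0; 0; 0]; [:: 0; 1; 0; 0; 0]; [:: 0; 0; 1; 0; 0];
               [:: 0; 0; 0; 1; 0]; [:: -1; 0; 0; 0; 1]].
set U := mk5 [:: [:: 1; 0; 0; 0; 0]; [:: 0; 1; 0; 0; 0]; [:: 0; 0; 1; 0; 0];
               [:: 0; 0; 0; 1; 0]; [:: 1; 0; 0; 0; 1]].
have -> : mk5 [:: [:: k0; k1; k2; k3; k0 - 1]; [:: a; b; 0; 0; a]; [:: al; 0; 1; 0; al];
               [:: be; 0; 0; 1; be]; [:: 1 - k0; -k1; -k2; -k3; 2 - k0]] =
          L *m xrow (inord 0) (inord 4) T *m U^T.
  apply/matrixP=> i j; rewrite -(inord_val i) -(inord_val j).
  have := ltn_ord i; have := ltn_ord j; move: (nat_of_ord i) (nat_of_ord j) => x y hy hx.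
  rewrite /L /T /U; do 4 rewrite ?mxE ?sum5. rewrite !tperm04 // !inordK //.
  by case: x hx => [|[|[|[|[|x]]]]] //= _; case: y hy => [|[|[|[|[|y]]]]] //= _; rewrite ?inordK //=; ring.
rewrite !det_mulmx det_tr xrowE det_mulmx det_perm odd_tperm.
rewrite -(inj_eq val_inj) /= !inordK //=.
have trig : forall M : 'M[R]_5, (forall i j : 'I_5, (i < j)%N -> M i j = 0) -> \det M = \prod_(i < 5) M i i.
  by move=> M HM; apply: det_trig; apply/is_trig_mxP.
rewrite !trig ?prod5 ?mxE ?inordK //=; first ring.
all: move=> [[|[|[|[|[|i]]]]] hi] [[|[|[|[|[|j]]]]] hj] //= _; by rewrite mxE.
Qed.
End S_T4.

Section S_T5.
Variable R : realType.
Implicit Types x y z : vec R.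

Lemma parseval (M : frm R) y z : Fr M ->
  mink y z = mink y (rowv M 0) * mink z (rowv M 0) - mink y (rowv M 1) * mink z (rowv M 1)
   - mink y (rowv M 2) * mink z (rowv M 2) - mink y (rowv M 3) * mink z (rowv M 3)
   - mink y (rowv M 4) * mink z (rowv M 4).
Proof.
move=> F.
have E0 := frame_recon y F (isT : (0 < 5)%N).
have E1 := frame_recon y F (isT : (1 < 5)%N).
have E2 := frame_recon y F (isT : (2 < 5)%N).
have E3 := frame_recon y F (isT : (3 < 5)%N).
have E4 := frame_recon y F (isT : (4 < 5)%N).
rewrite (minkE y z) E0 E1 E2 E3 E4.
rewrite !(minkE z (rowv M _)) !rowvE; ring.
Qed.

Lemma recon_coef (M : frm R) y j c0 c1 c2 c3 c4 : Fr M -> (j < 5)%N ->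
  c0 = mink y (rowv M 0) -> c1 = - mink y (rowv M 1) -> c2 = - mink y (rowv M 2) ->
  c3 = - mink y (rowv M 3) -> c4 = - mink y (rowv M 4) ->
  co y j = c0 * M (inord 0) (inord j) + c1 * M (inord 1) (inord j) + c2 * M (inord 2) (inord j)
         + c3 * M (inord 3) (inord j) + c4 * M (inord 4) (inord j).
Proof.
move=> F hj -> -> -> -> ->; rewrite (frame_recon y F hj); ring.
Qed.

Lemma pos_sq1 (c : R) : 0 < c -> c ^+ 2 = 1 -> c = 1.
Proof. move=> h1 h2; nra. Qed.

Lemma Fr_ortho (M : frm R) i j : Fr M -> (i < 5)%N -> (j < 5)%N ->
  mink (rowv M i) (rowv M j) = Defs.eta R i j.
Proof. by case=> H _; apply: H. Qed.

Lemma v1_transport (M M' : frm R) (p : vec R) :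
  Fr M -> Fr M' ->
  rowv M 4 = p - rowv M 0 -> rowv M' 4 = p - rowv M' 0 ->
  mink (rowv M 0) p = 1 -> mink (rowv M' 0) p = 1 -> mink p p = 0 ->
  (forall a, mink a p = 0 -> mink (rowv M' 2) a = mink (rowv M 2) a) ->
  (forall a, mink a p = 0 -> mink (rowv M' 3) a = mink (rowv M 3) a) ->
  forall s, mink s p = 0 -> mink (rowv M' 1) s = mink (rowv M 1) s.
Proof.
move=> F F' E4 E4' x1 x1' pp H2 H3 s sp.
set r0 := rowv M 0; set r1 := rowv M 1; set r2 := rowv M 2; set r3 := rowv M 3; set r4 := rowv M 4.
set r0' := rowv M' 0; set r1' := rowv M' 1; set r2' := rowv M' 2; set r3' := rowv M' 3; set r4' := rowv M' 4.
have o := Fr_ortho F; have o' := Fr_ortho F'.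
have m4 : forall y, mink y r4 = mink y p - mink y r0.
  by move=> y; rewrite /r4 E4 minkC minkBl !(minkC _ y).
have m4' : forall y, mink y r4' = mink y p - mink y r0'.
  by move=> y; rewrite /r4' E4' minkC minkBl !(minkC _ y).
have m4l' : forall y, mink r4' y = mink p y - mink r0' y.
  by move=> y; rewrite minkC m4' !(minkC y).
have tp : forall k, (0 < k < 4)%N -> mink (rowv M k) p = 0.
  move=> k /andP[k0 k4].
  have := o k 4%N (ltn_trans k4 (isT : (4 < 5)%N)) isT; rewrite m4 (o k 0%N (ltn_trans k4 (isT : (4 < 5)%N)) isT).
  by rewrite /Defs.eta; case: k k0 k4 => [|[|[|[|k]]]] //= _ _; rewrite subr0.
have tp' : forall k, (0 < k < 4)%N -> mink (rowv M' k) p = 0.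
  move=> k /andP[k0 k4].
  have := o' k 4%N (ltn_trans k4 (isT : (4 < 5)%N)) isT; rewrite m4' (o' k 0%N (ltn_trans k4 (isT : (4 < 5)%N)) isT).
  by rewrite /Defs.eta; case: k k0 k4 => [|[|[|[|k]]]] //= _ _; rewrite subr0.
have r1p := tp 1%N isT; have r2p := tp 2%N isT; have r3p := tp 3%N isT.
have r1p' := tp' 1%N isT; have r2p' := tp' 2%N isT; have r3p' := tp' 3%N isT.
have a21 : mink r2' r1 = 0 by rewrite H2 // (o 2%N 1%N).
have a22 : mink r2' r2 = -1 by rewrite H2 // (o 2%N 2%N).
have a23 : mink r2' r3 = 0 by rewrite H2 // (o 2%N 3%N).
have a31 : mink r3' r1 = 0 by rewrite H3 // (o 3%N 1%N).
have a32 : mink r3' r2 = 0 by rewrite H3 // (o 3%N 2%N).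
have a33 : mink r3' r3 = -1 by rewrite H3 // (o 3%N 3%N).
have a12 : mink r1' r2 = 0 by rewrite minkC -H2 ?(o' 2%N 1%N).
have a13 : mink r1' r3 = 0 by rewrite minkC -H3 ?(o' 3%N 1%N).
have pr0 : mink p r0 = 1 by rewrite minkC.
have pr1 : mink p r1 = 0 by rewrite minkC.
have pr2 : mink p r2 = 0 by rewrite minkC.
have pr3 : mink p r3 = 0 by rewrite minkC.
set b := - mink r1' r1.
have b2 : b ^+ 2 = 1.
  have := parseval r1' r1' F; rewrite (o' 1%N 1%N) // -/r0 -/r1 -/r2 -/r3 -/r4.
  rewrite a12 a13 m4 r1p' /b /Defs.eta /= => h; nra.
set k0 := mink r0' r0; set k1 := - mink r0' r1; set k2 := - mink r0' r2; set k3 := - mink r0' r3.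
set a := mink r1' r0; set al := mink r2' r0; set be := mink r3' r0.
have EM : M' = mk5 [:: [:: k0; k1; k2; k3; k0 - 1]; [:: a; b; 0; 0; a]; [:: al; 0; 1; 0; al];
               [:: be; 0; 0; 1; be]; [:: 1 - k0; -k1; -k2; -k3; 2 - k0]] *m M.
  apply/matrixP=> i j; rewrite -(inord_val i) -(inord_val j).
  have := ltn_ord i; have := ltn_ord j; move: (nat_of_ord i) (nat_of_ord j) => x y hy hx.
  rewrite mxE sum5 !mxE !inordK //.
  have -> : M' (inord x) (inord y) = co (rowv M' x) y by rewrite rowvE.
  case: x hx => [|[|[|[|[|x]]]]] //= _.
  - apply: recon_coef => //; rewrite -/r0 -/r1 -/r2 -/r3 -/r4 -/r0' ?m4 /k0 /k1 /k2 /k3 ?x1' //; ring.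
  - apply: recon_coef => //; rewrite -/r0 -/r1 -/r2 -/r3 -/r4 -/r1' ?m4 ?r1p' ?a12 ?a13 /a /b //; ring.
  - apply: recon_coef => //; rewrite -/r0 -/r1 -/r2 -/r3 -/r4 -/r2' ?m4 ?r2p' ?a21 ?a22 ?a23 /al //; ring.
  - apply: recon_coef => //; rewrite -/r0 -/r1 -/r2 -/r3 -/r4 -/r3' ?m4 ?r3p' ?a31 ?a32 ?a33 /be //; ring.
  - apply: recon_coef => //; rewrite -/r0 -/r1 -/r2 -/r3 -/r4 -/r4' ?m4 ?m4'.
    all: rewrite ?m4l' ?pr0 ?pr1 ?pr2 ?pr3 ?pp ?x1' /k0 /k1 /k2 /k3. all: try ring.
have hb : 0 < b.
  have dM : 0 < \det M by case: F => _ [].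
  have dM' : 0 < \det M' by case: F' => _ [].
  move: dM'; rewrite {1}EM det_mulmx detKc => h.
  by rewrite -(pmulr_lgt0 _ dM).
have b1 : b = 1 by apply: pos_sq1.
have e : mink r1' r1 = -1 by move: b1; rewrite /b => h; rewrite -[LHS]opprK h.
rewrite (parseval r1' s F) -/r0 -/r1 -/r2 -/r3 -/r4 m4 r1p' a12 a13 e (m4 s) sp.
rewrite /a (minkC s r1); ring.
Qed.
End S_T5.

Section S_T6.
Variable R : realType.

Lemma quad_derivable (A B K t : R) : derivable (fun s : R => A + s * B + s ^+ 2 * K) t 1.
Proof.
apply: derivableD; first apply: derivableD.
- exact: derivable_cst.
- apply: derivableM; [exact: derivable_id | exact: derivable_cst].
- apply: derivableM; last exact: derivable_cst.
  apply: derivableM; [exact: derivable_id | exact: derivable_id].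
Qed.

Lemma future_pos_aux (y0 y1 y2 y3 y4 p0 p1 p2 p3 p4 : R) :
  y0*y0 - y1*y1 - y2*y2 - y3*y3 - y4*y4 = 1 ->
  y0* p0 - y1* p1 - y2* p2 - y3* p3 - y4* p4 = 1 ->
  p0* p0 - p1* p1 - p2* p2 - p3* p3 - p4* p4 = 0 -> 0 < p0 -> 0 < y0.
Proof.
move=> hy hyp hp p0pos.
have L : (y1* p1 + y2* p2 + y3* p3 + y4* p4)^+2 <= (y1*y1+y2*y2+y3*y3+y4*y4) * (p1* p1+p2* p2+p3* p3+p4* p4).
  rewrite -subr_ge0.
  have -> : (y1*y1+y2*y2+y3*y3+y4*y4) * (p1* p1+p2* p2+p3* p3+p4* p4) - (y1* p1 + y2* p2 + y3* p3 + y4* p4)^+2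
     = (y1* p2-y2* p1)^+2 + (y1* p3-y3* p1)^+2 + (y1* p4-y4* p1)^+2 + (y2* p3-y3* p2)^+2
       + (y2* p4-y4* p2)^+2 + (y3* p4-y4* p3)^+2 by ring.
  by rewrite !addr_ge0 ?sqr_ge0.
have e1 : y1* p1 + y2* p2 + y3* p3 + y4* p4 = y0* p0 - 1 by lra.
have e2 : y1*y1+y2*y2+y3*y3+y4*y4 = y0*y0 - 1 by lra.
have e3 : p1* p1+p2* p2+p3* p3+p4* p4 = p0* p0 by lra.
rewrite e1 e2 e3 in L.
rewrite ltNge; apply/negP => hy0.
have : 0 <= - (y0 * p0) by rewrite oppr_ge0; apply: mulr_le0_ge0 => //; lra.
nra.
Qed.

Lemma future_pos (y p : vec R) : mink y y = 1 -> mink y p = 1 -> mink p p = 0 -> 0 < co p 0 -> 0 < co y 0.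
Proof. rewrite !minkE; exact: future_pos_aux. Qed.
End S_T6.

Section S_T7.
Variable R : realType.
Implicit Types x y z : vec R.

Lemma minkDr x y z : mink x (y + z) = mink x y + mink x z.
Proof. by rewrite !(minkC x) minkDl. Qed.
Lemma minkZr a x z : mink x (a *: z) = a * mink x z.
Proof. by rewrite !(minkC x) minkZl. Qed.
Lemma minkBr x y z : mink x (y - z) = mink x y - mink x z.
Proof. by rewrite !(minkC x) minkBl. Qed.

Lemma par_inv (p : vec R) (V : vec R -> vec R) (x x' a : vec R) :
  mink p p = 0 -> 0 < co p 0 -> parallel p V ->
  (forall y, horosphere p y -> mink (V y) p = 0) ->
  horosphere p x -> horosphere p x' -> mink a p = 0 ->
  mink (V x') a = mink (V x) a.
Proof.
move=> pp p0 par tan [[hxx hx0] hxp] [[hx'x' hx'0] hx'p] ap.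
set k := mink x' x - 1.
set u := x' - x - k *: p.
set c := fun t : R => x + t *: u + (t ^+ 2 * k) *: p.
have up : mink u p = 0 by rewrite /u !minkBl minkZl hx'p hxp pp; ring.
have ux : mink u x = 0 by rewrite /u !minkBl minkZl hxx (minkC p) hxp /k; ring.
have pu : mink p u = 0 by rewrite minkC.
have xu : mink x u = 0 by rewrite minkC.
have uu : mink u u = - 2 * k.
  rewrite /u !minkBl !minkBr !minkZl !minkZr !(minkC p) (minkC x x') hx'x' hxx hx'p hxp pp.
  rewrite /k; ring.
have hc : forall t, horosphere p (c t).
  move=> t.
  have cp : mink (c t) p = 1 by rewrite /c !minkDl !minkZl up pp hxp; ring.
  have cc : mink (c t) (c t) = 1.
    rewrite /c !minkDl !minkDr !minkZl !minkZr uu up pp ux xu pu hxx hxp (minkC p) hxp.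
    ring.
  split=> //; split=> //.
  exact: (future_pos cc cp pp p0).
have hder : forall t (j : 'I_5), derivable (fun s => co (c s) j) t 1.
  move=> t j.
  have -> : (fun s => co (c s) j) = (fun s => co x j + s * co u j + s ^+ 2 * (k * co p j)).
    by apply: boolp.funext => s; rewrite /c /= coD coD coZ coZ mulrA.
  exact: quad_derivable.
have dm : forall (t : R) (b : vec R), is_derive t (1:R) (fun s => mink (V (c s)) b)
    (mink (\row_(j < 5) derive1 (fun s => co (V (c s)) j) t) b).
  move=> t b; have [hd ho] := par c hc hder t.
  pose e := fun j : 'I_5 => Defs.eta R j j * co b j.
  pose g := fun j : 'I_5 => fun s => co (V (c s)) j.
  have fE : (fun s => mink (V (c s)) b) = \sum_(j < 5) (e j \*: g j).
    apply: boolp.funext => s; rewrite fct_sumE sum5 /e /g /= minkE !inordK // /Defs.eta /=.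
    rewrite /GRing.scale /=; ring.
  have gd : forall j, is_derive t (1:R) (g j) ('D_1 (g j) t) by move=> j; apply: derivableP; apply: hd.
  rewrite fE; apply: is_derive_eq.
  rewrite sum5 minkE /e /Defs.eta !inordK //=.
  rewrite /g /co !mxE !derive1E /=. rewrite /GRing.scale /=. ring.
pose f := fun s => mink (V (c s)) a.
have fd : forall t : R, is_derive t (1:R) f 0.
  move=> t; have [hd ho] := par c hc hder t.
  set D := \row_(j < 5) derive1 (fun s => co (V (c s)) j) t.
  have Dp : mink D p = 0.
    have := @derive_val _ _ _ _ _ _ _ (dm t p).
    have -> : (fun s => mink (V (c s)) p) = cst 0.
      by apply: boolp.funext => s; rewrite tan.
    by rewrite derive_cst.
  have Da : mink D a = 0.
    have tw : tangent_h p (c t) (a - mink a (c t) *: p).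
      split; rewrite minkBl minkZl ?pp ?ap; last by ring.
      by have [[cc _] cp] := hc t; rewrite (minkC p) cp mulr1 subrr.
    have := ho _ tw; rewrite minkBr minkZr Dp; move=> h; rewrite -h; ring.
  by apply: is_derive_eq; exact: Da.
have h := @is_derive_0_is_cst _ f 1 0 fd.
have c1 : c 1 = x'.
  rewrite /c /u expr1n mul1r scale1r.
  by apply/rowP => j; rewrite !mxE; ring.
have c0 : c 0 = x.
  by rewrite /c expr0n /= mul0r !scale0r !addr0.
by move: h; rewrite /f c1 c0.
Qed.
End S_T7.

Section S_T8.
Variable R : realType.

Definition Rq (q : quat R) (i j : nat) : R :=
  let w := qr q in let x := qi q in let y := qj q in let z := qk q in
  match i, j with
  | 0, 0 => w^+2 + x^+2 - y^+2 - z^+2 | 0, 1 => 2 * (x * y - w * z) | 0, 2 => 2 * (x * z + w * y)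
  | 1, 0 => 2 * (x * y + w * z) | 1, 1 => w^+2 - x^+2 + y^+2 - z^+2 | 1, 2 => 2 * (y * z - w * x)
  | 2, 0 => 2 * (x * z - w * y) | 2, 1 => 2 * (y * z + w * x) | _, _ => w^+2 - x^+2 - y^+2 + z^+2
  end.

Definition qconj (q : quat R) := Quat (qr q) (- qi q) (- qj q) (- qk q).
Definition qnorm (q : quat R) := qr q ^+ 2 + qi q ^+ 2 + qj q ^+ 2 + qk q ^+ 2.
Definition F3 (s : nat -> R) (i : nat) := if i == 0%N then - s 0%N else s i.
Definition dot3 (f g : nat -> R) := f 0%N * g 0%N + f 1%N * g 1%N + f 2%N * g 2%N.

Lemma Rq_mul a b i j : (i < 3)%N -> (j < 3)%N ->
  Rq (qmul a b) i j = Rq a i 0 * Rq b 0 j + Rq a i 1 * Rq b 1 j + Rq a i 2 * Rq b 2 j.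
Proof.
case: a b => [a0 a1 a2 a3] [b0 b1 b2 b3].
by case: i => [|[|[|i]]] //; case: j => [|[|[|j]]] // _ _; rewrite /Rq /qmul /=; ring.
Qed.

Lemma Rq_conj a i j : (i < 3)%N -> (j < 3)%N -> Rq (qconj a) i j = Rq a j i.
Proof.
case: a => [a0 a1 a2 a3].
by case: i => [|[|[|i]]] //; case: j => [|[|[|j]]] // _ _; rewrite /Rq /qconj /=; ring.
Qed.

Lemma qnorm_mul a b : qnorm (qmul a b) = qnorm a * qnorm b.
Proof. case: a b => [a0 a1 a2 a3] [b0 b1 b2 b3]; rewrite /qnorm /qmul /=; ring. Qed.
Lemma qnorm_conj a : qnorm (qconj a) = qnorm a.
Proof. case: a => [a0 a1 a2 a3]; rewrite /qnorm /qconj /=; ring. Qed.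

Definition det3 (a b c d e f g h i : R) := a * (e * i - f * h) - b * (d * i - f * g) + c * (d * h - e * g).

Lemma adj3 (a b c d e f g h i s0 s1 s2 : R) :
  a * s0 + b * s1 + c * s2 = 0 -> d * s0 + e * s1 + f * s2 = 0 -> g * s0 + h * s1 + i * s2 = 0 ->
  det3 a b c d e f g h i * s0 = 0 /\ det3 a b c d e f g h i * s1 = 0 /\ det3 a b c d e f g h i * s2 = 0.
Proof.
move=> E1 E2 E3; set D := det3 a b c d e f g h i; split; [|split].
- have -> : D * s0 = (e * i - f * h) * (a * s0 + b * s1 + c * s2) - (b * i - c * h) * (d * s0 + e * s1 + f * s2)
     + (b * f - c * e) * (g * s0 + h * s1 + i * s2) by rewrite /D /det3; ring.
  by rewrite E1 E2 E3; ring.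
- have -> : D * s1 = - (d * i - f * g) * (a * s0 + b * s1 + c * s2) + (a * i - c * g) * (d * s0 + e * s1 + f * s2)
     - (a * f - c * d) * (g * s0 + h * s1 + i * s2) by rewrite /D /det3; ring.
  by rewrite E1 E2 E3; ring.
- have -> : D * s2 = (d * h - e * g) * (a * s0 + b * s1 + c * s2) - (a * h - b * g) * (d * s0 + e * s1 + f * s2)
     + (a * e - b * d) * (g * s0 + h * s1 + i * s2) by rewrite /D /det3; ring.
  by rewrite E1 E2 E3; ring.
Qed.

Lemma det3_R (w x y z : R) :
  det3 (w ^+ 2 + x ^+ 2 + y ^+ 2 + z ^+ 2 + (w ^+ 2 + x ^+ 2 - y ^+ 2 - z ^+ 2))
       (- (2 * (x * y - w * z))) (- (2 * (x * z + w * y)))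
       (2 * (x * y + w * z)) (w ^+ 2 + x ^+ 2 + y ^+ 2 + z ^+ 2 - (w ^+ 2 - x ^+ 2 + y ^+ 2 - z ^+ 2))
       (- (2 * (y * z - w * x)))
       (2 * (x * z - w * y)) (- (2 * (y * z + w * x)))
       (w ^+ 2 + x ^+ 2 + y ^+ 2 + z ^+ 2 - (w ^+ 2 - x ^+ 2 - y ^+ 2 + z ^+ 2))
  = 8 * x ^+ 2 * (w ^+ 2 + x ^+ 2 + y ^+ 2 + z ^+ 2) ^+ 2.
Proof. rewrite /det3; ring. Qed.

Lemma det_step (q : quat R) (s : nat -> R) : qnorm q = 1 ->
  (forall a, (a < 3)%N -> s a = Rq q a 0 * F3 s 0 + Rq q a 1 * F3 s 1 + Rq q a 2 * F3 s 2) ->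
  qi q = 0 \/ (s 0%N = 0 /\ s 1%N = 0 /\ s 2%N = 0).
Proof.
case: q => [w x y z]; rewrite /qnorm /= => N H.
have H0 := H 0%N isT; have H1 := H 1%N isT; have H2 := H 2%N isT.
move: H0 H1 H2; rewrite /F3 /Rq /= => H0 H1 H2.
have E1 : (w ^+ 2 + x ^+ 2 + y ^+ 2 + z ^+ 2 + (w ^+ 2 + x ^+ 2 - y ^+ 2 - z ^+ 2)) * s 0%N + (- (2 * (x * y - w * z))) * s 1%N
          + (- (2 * (x * z + w * y))) * s 2%N = 0.
  rewrite N -(subrr (s 0%N)) {3}H0; ring.
have E2 : (2 * (x * y + w * z)) * s 0%N + (w ^+ 2 + x ^+ 2 + y ^+ 2 + z ^+ 2 - (w ^+ 2 - x ^+ 2 + y ^+ 2 - z ^+ 2)) * s 1%N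
          + (- (2 * (y * z - w * x))) * s 2%N = 0.
  rewrite N -(subrr (s 1%N)) {3}H1; ring.
have E3 : (2 * (x * z - w * y)) * s 0%N + (- (2 * (y * z + w * x))) * s 1%N
          + (w ^+ 2 + x ^+ 2 + y ^+ 2 + z ^+ 2 - (w ^+ 2 - x ^+ 2 - y ^+ 2 + z ^+ 2)) * s 2%N = 0.
  rewrite N -(subrr (s 2%N)) {3}H2; ring.
have [D0 [D1 D2]] := adj3 E1 E2 E3.
rewrite det3_R N expr1n mulr1 in D0 D1 D2.
have [x0|x0] := eqVneq x 0; first by left.
right; have nz : 8 * x ^+ 2 != 0 :> R by rewrite mulf_neq0 // sqrf_eq0.
split; [move/eqP: D0 | split; [move/eqP: D1 | move/eqP: D2]]; by rewrite mulf_eq0 (negbTE nz) => /eqP.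
Qed.

Lemma quat_main (q1 q2 q3 : quat R) (s1 s2 s3 : nat -> R) :
  qnorm q1 = 1 -> qnorm q2 = 1 -> qnorm q3 = 1 ->
  (forall a, (a < 3)%N -> s2 a = Rq q1 0 a * F3 s1 0 + Rq q1 1 a * F3 s1 1 + Rq q1 2 a * F3 s1 2) ->
  (forall a, (a < 3)%N -> s2 a = Rq q2 0 a * F3 s3 0 + Rq q2 1 a * F3 s3 1 + Rq q2 2 a * F3 s3 2) ->
  (forall a, (a < 3)%N -> s1 a = Rq q3 0 a * F3 s3 0 + Rq q3 1 a * F3 s3 1 + Rq q3 2 a * F3 s3 2) ->
  ~ (s1 0%N = 0 /\ s1 1%N = 0 /\ s1 2%N = 0) ->
  qi (qmul (qmul q1 (qconj q2)) q3) = 0.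
Proof.
move=> N1 N2 N3 H1 H2 H3 nz.
have G : forall c, (c < 3)%N ->
    F3 s3 c = Rq q2 c 0 * s2 0%N + Rq q2 c 1 * s2 1%N + Rq q2 c 2 * s2 2%N.
  move=> c hc; rewrite !H2 //.
  transitivity (qnorm q2 ^+ 2 * F3 s3 c); first by rewrite N2 expr1n mul1r.
  move: (F3 s3) => f; case: q2 {N2 H2} => [w x y z].
  by case: c hc => [|[|[|c]]] // _; rewrite /qnorm /Rq /=; ring.
set Z := qmul (qmul (qconj q3) q2) (qconj q1).
have HZ : forall a, (a < 3)%N -> s1 a = Rq Z a 0 * F3 s1 0 + Rq Z a 1 * F3 s1 1 + Rq Z a 2 * F3 s1 2.
  move=> a ha; rewrite H3 // !G // !H1 //.
  rewrite /Z !Rq_mul // !Rq_conj //; ring.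
have NZ : qnorm Z = 1 by rewrite /Z !qnorm_mul !qnorm_conj N1 N2 N3 !mul1r.
have [Zi|s0] := det_step NZ HZ; last by exfalso; apply: nz.
rewrite -[RHS]oppr0 -Zi /Z.
case: q1 {N1 H1 HZ NZ Zi Z} => [a0 a1 a2 a3]; case: q2 {N2 H2 G} => [b0 b1 b2 b3];
  case: q3 {N3 H3} => [c0 c1 c2 c3]; rewrite /qmul /qconj /=; ring.
Qed.
End S_T8.

Section S_T9.
Variable R : realType.

Definition hq (th : R) (v : 'rV[R]_3) : quat R :=
  Quat (cos (th / 2)) (sin (th / 2) * v ord0 (inord 0)) (sin (th / 2) * v ord0 (inord 1))
       (sin (th / 2) * v ord0 (inord 2)).

Lemma sum3 (V : nmodType) (F : 'I_3 -> V) : \sum_(i < 3) F i = F (inord 0) + F (inord 1) + F (inord 2).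
Proof.
rewrite !big_ord_recl big_ord0 addr0 !addrA.
by congr (_ + _ + _); congr F; apply/val_inj; rewrite /= inordK.
Qed.

Lemma hq_norm th v : unit3 v -> qnorm (hq th v) = 1.
Proof.
rewrite /unit3 sum3 /qnorm /hq /= => h.
have := cos2Dsin2 (th / 2); move: (cos (th / 2)) (sin (th / 2)) => c s hcs.
move: h; move: (v ord0 (inord 0)) (v ord0 (inord 1)) (v ord0 (inord 2)) => v0 v1 v2 h.
transitivity (c ^+ 2 + s ^+ 2 * (v0 ^+ 2 + v1 ^+ 2 + v2 ^+ 2)); first ring.
by rewrite h mulr1.
Qed.

Lemma rod_alg (c s v0 v1 v2 A B k1 k2 : R) : c ^+ 2 + s ^+ 2 = 1 -> v0 ^+ 2 + v1 ^+ 2 + v2 ^+ 2 = 1 ->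
  A - B = k1 * (v0 ^+ 2 + v1 ^+ 2 + v2 ^+ 2 - 1) + k2 * (c ^+ 2 + s ^+ 2 - 1) -> A = B.
Proof. move=> h1 h2; rewrite h1 h2 !subrr !mulr0 addr0 => /eqP; rewrite subr_eq0 => /eqP. done. Qed.

Lemma rodE th v a b : unit3 v -> (a < 3)%N -> (b < 3)%N ->
  rodrigues th v (inord a) (inord b) = Rq (hq th v) a b.
Proof.
move=> hv ha hb.
have thE : th = th / 2 + th / 2 by rewrite -splitr.
have cth : cos th = cos (th / 2) ^+ 2 - sin (th / 2) ^+ 2 by rewrite {1}thE cosD.
have sth : sin th = 2 * sin (th / 2) * cos (th / 2) by rewrite {1}thE sinD; ring.
have hv' := hv; rewrite /unit3 sum3 in hv'.
have cs := cos2Dsin2 (th / 2).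
rewrite /rodrigues !mxE big_ord1 !mxE !inordK // cth sth.
have -> : (inord a == inord b :> 'I_3) = (a == b) by rewrite -(inj_eq val_inj) /= !inordK.
have -> : v ord0 (inord a) = (if a == 0%N then v ord0 (inord 0) else if a == 1%N then v ord0 (inord 1) else v ord0 (inord 2)).
  by case: a ha {hb} => [|[|[|a]]].
have -> : v ord0 (inord b) = (if b == 0%N then v ord0 (inord 0) else if b == 1%N then v ord0 (inord 1) else v ord0 (inord 2)).
  by case: b hb {ha} => [|[|[|b]]].
rewrite /Rq /hq /=.
move: (cos (th / 2)) (sin (th / 2)) cs => c s cs.
move: hv'; move: (v ord0 (inord 0)) (v ord0 (inord 1)) (v ord0 (inord 2)) => v0 v1 v2 hv'.
case: a ha => [|[|[|a]]] // _; case: b hb => [|[|[|b]]] // _ /=.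
- by apply: (rod_alg (k1 := s ^+ 2) (k2 := - (v0 * v0)) cs hv'); ring.
- by apply: (rod_alg (k1 := 0) (k2 := - (v0 * v1)) cs hv'); ring.
- by apply: (rod_alg (k1 := 0) (k2 := - (v0 * v2)) cs hv'); ring.
- by apply: (rod_alg (k1 := 0) (k2 := - (v1 * v0)) cs hv'); ring.
- by apply: (rod_alg (k1 := s ^+ 2) (k2 := - (v1 * v1)) cs hv'); ring.
- by apply: (rod_alg (k1 := 0) (k2 := - (v1 * v2)) cs hv'); ring.
- by apply: (rod_alg (k1 := 0) (k2 := - (v2 * v0)) cs hv'); ring.
- by apply: (rod_alg (k1 := 0) (k2 := - (v2 * v1)) cs hv'); ring.
- by apply: (rod_alg (k1 := s ^+ 2) (k2 := - (v2 * v2)) cs hv'); ring.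
Qed.

Lemma lam_prod r1 t1 (v1 : 'rV[R]_3) r2 t2 (v2 : 'rV[R]_3) r3 t3 (v3 : 'rV[R]_3) :
  qi (qmul (qmul (hq t1 v1) (qconj (hq t2 v2))) (hq t3 v3)) = 0 ->
  qk (qmul (qmul (lam r1 t1 v1) (qinv (lam r2 t2 v2))) (lam r3 t3 v3)) = 0.
Proof.
rewrite /lam /qinv /hq /qmul /qconj /=.
move: (expR (r1 / 2)) (expR (r2 / 2)) (expR (r3 / 2)) => e1 e2 e3.
move: (cos (t1 / 2)) (sin (t1 / 2)) (cos (t2 / 2)) (sin (t2 / 2)) (cos (t3 / 2)) (sin (t3 / 2)) => c1 s1 c2 s2 c3 s3.
move: (v1 ord0 (inord 0)) (v1 ord0 (inord 1)) (v1 ord0 (inord 2)) => a0 a1 a2.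
move: (v2 ord0 (inord 0)) (v2 ord0 (inord 1)) (v2 ord0 (inord 2)) => b0 b1 b2.
move: (v3 ord0 (inord 0)) (v3 ord0 (inord 1)) (v3 ord0 (inord 2)) => d0 d1 d2.
set n := (X in _ / X).
move=> h.
have := congr1 (fun z => e1 * e2 * e3 / n * z) h; rewrite /= mulr0 => <-.
rewrite /n; ring.
Qed.
End S_T9.

Section S_T11.
Variable R : realType.
Implicit Types x y z : vec R.

Lemma pconcat1 (c d : R -> frm R) : pconcat c d 1 = d 1.
Proof.
rewrite /pconcat; have -> : (1 <= 2^-1 :> R) = false.
  by apply/negbTE; rewrite -ltNge; rewrite invf_lt1 //; lra.
by rewrite mulr1 (_ : 2 - 1 = 1 :> R) //; lra.
Qed.

Lemma homotopic_end (c d : R -> frm R) : homotopic c d -> c 1 = d 1.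
Proof.
case=> H [_ [_ [H1 H2]]].
have I1 : I01 (1 : R) by rewrite /I01 /=; lra.
have [_ h1] := H1 1 I1; have [_ h2] := H2 1 I1.
by rewrite -h1 h2.
Qed.

Definition newv (D : sdh R) y (a : nat) : vec R := nth 0 [:: v1 D y; vi D y; vj D y] a.
Definition oldv (D : sdh R) x (a : nat) : vec R := nth 0 [:: - v1 D x; vi D x; vj D x] a.



Lemma mkframe_row x e1 e2 e3 e4 (i : nat) : (i < 5)%N ->
  row (inord i) (mkframe x e1 e2 e3 e4) = nth x [:: x; e1; e2; e3; e4] i.
Proof. by move=> hi; apply/rowP => j; rewrite !mxE inordK // (mxE). Qed.

Lemma mapframeE (f : vec R -> vec R) (M : frm R) i j : mapframe f M i j = f (row i M) ord0 j.
Proof. by rewrite mxE. Qed.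

Lemma mkframeE x e1 e2 e3 e4 (i j : nat) : (i < 5)%N -> (j < 5)%N ->
  mkframe x e1 e2 e3 e4 (inord i) (inord j) = co (nth x [:: x; e1; e2; e3; e4] i) j.
Proof. by move=> hi hj; rewrite mxE inordK. Qed.

Lemma Lmap_perp (p1 p2 : vec R) (r : R) w s : mink s p1 = 0 -> mink s p2 = 0 ->
  mink (Lmap p1 p2 r w) s = mink w s.
Proof.
move=> h1 h2; rewrite /Lmap !minkDl !minkZl !(minkC _ s) h1 h2; ring.
Qed.

Lemma endpoint (Dm Dn : sdh R) x y rho th v :
  is_sdh Dn -> horosphere (centre Dn) y ->
  homotopic (pconcat (pconcat (win Dm x) (transl_path (centre Dm) (centre Dn) rho (Fin Dm x)))
               (rot_path th v (mapframe (Lmap (centre Dm) (centre Dn) rho) (Fin Dm x))))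
            (wout Dn y) ->
  forall s, mink s (centre Dm) = 0 -> mink s (centre Dn) = 0 ->
  forall a, (a < 3)%N -> mink (newv Dn y a) s =
     rodrigues th v (inord 0) (inord a) * mink (oldv Dm x 0) s
   + rodrigues th v (inord 1) (inord a) * mink (oldv Dm x 1) s
   + rodrigues th v (inord 2) (inord a) * mink (oldv Dm x 2) s.
Proof.
move=> sd hy hom s s1 s2 a ha.
have E := homotopic_end hom.
rewrite pconcat1 /rot_path mul1r in E.
have [_ [_ [_ [_ [_ [W _]]]]]] := sd.
have [_ [_ W1]] := W y hy.
rewrite W1 in E.
have Ej : forall j, (j < 5)%N -> co (newv Dn y a) j =
     rodrigues th v (inord 0) (inord a) * co (Lmap (centre Dm) (centre Dn) rho (oldv Dm x 0)) j
   + rodrigues th v (inord 1) (inord a) * co (Lmap (centre Dm) (centre Dn) rho (oldv Dm x 1)) j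
   + rodrigues th v (inord 2) (inord a) * co (Lmap (centre Dm) (centre Dn) rho (oldv Dm x 2)) j.
  move=> j hj.
  have := congr1 (fun M : frm R => M (inord a.+1) (inord j)) E.
  rewrite /Fout mkframeE //; last lia.
  have -> : newv Dn y a = nth y [:: y; v1 Dn y; vi Dn y; vj Dn y; Nout Dn y] a.+1.
    by case: a ha {E} => [|[|[|a]]].
  move=> <-.
  rewrite mxE inordK; last lia.
  have -> : (0 < a.+1 < 4)%N by lia.
  rewrite sum3 !mapframeE !inordK // !mkframe_row //=.
rewrite -(@Lmap_perp (centre Dm) (centre Dn) rho (oldv Dm x 0) s s1 s2).
rewrite -(@Lmap_perp (centre Dm) (centre Dn) rho (oldv Dm x 1) s s1 s2).
rewrite -(@Lmap_perp (centre Dm) (centre Dn) rho (oldv Dm x 2) s s1 s2).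
rewrite !minkE !Ej //; ring.
Qed.
End S_T11.

Section S_T12.
Variable R : realType.
Implicit Types x y z : vec R.

Lemma exists_perp (p1 p2 p3 : vec R) :
  exists s : vec R, s != 0 /\ mink s p1 = 0 /\ mink s p2 = 0 /\ mink s p3 = 0.
Proof.
pose A : 'M[R]_(5, 1 + 1 + 1) := row_mx (row_mx (Jm R *m p1^T) (Jm R *m p2^T)) (Jm R *m p3^T).
have rk : (\rank (kermx A) > 0)%N.
  rewrite mxrank_ker; have := rank_leq_col A; lia.
have K0 : kermx A != 0 by rewrite -mxrank_eq0 -lt0n.
have [i Ki] : exists i, row i (kermx A) != 0.
  apply/existsP; move: K0; apply: contraR; rewrite negb_exists => /forallP H.
  by apply/eqP/row_matrixP => i; rewrite row0; apply/eqP; move: (H i); rewrite negbK.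
exists (row i (kermx A)); split=> //.
have : row i (kermx A) *m A = 0 by rewrite -row_mul mulmx_ker row0.
rewrite /A !mul_mx_row => /eqP; rewrite !row_mx_eq0 => /andP[/andP[/eqP e1 /eqP e2] /eqP e3].
by rewrite !mink_mx -!mulmxA e1 e2 e3 !mxE.
Qed.


Lemma sigma_nz (M : frm R) (p q s : vec R) : Fr M -> rowv M 4 = p - rowv M 0 ->
  mink s p = 0 -> mink s q = 0 -> mink p q != 0 ->
  mink s (rowv M 1) = 0 -> mink s (rowv M 2) = 0 -> mink s (rowv M 3) = 0 -> s = 0.
Proof.
move=> F E4 sp sq pq s1 s2 s3.
set k := mink s (rowv M 0).
have m4 : mink s (rowv M 4) = - k by rewrite E4 minkBr sp sub0r.
have sE : forall j, (j < 5)%N -> co s j = k * co p j.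
  move=> j hj; rewrite (frame_recon s F hj) s1 s2 s3 m4 -/k.
  have : co (rowv M 4) j = co p j - co (rowv M 0) j by rewrite E4 coB.
  rewrite !rowvE => ->; ring.
have k0 : k = 0.
  have : mink s q = k * mink p q.
    by rewrite !minkE !sE //; ring.
  rewrite sq => /esym/eqP; rewrite mulf_eq0 (negbTE pq) orbF => /eqP //.
apply/rowP => j; have -> : s ord0 j = co s j by rewrite /co inord_val.
by rewrite sE // k0 mul0r mxE.
Qed.

Lemma Fout_row (D : sdh R) x (i : nat) : (i < 5)%N ->
  rowv (Fout D x) i = nth x [:: x; v1 D x; vi D x; vj D x; Nout D x] i.
Proof. by move=> hi; rewrite /rowv /Fout mkframe_row. Qed.

Lemma transport (D : sdh R) x x' s : is_sdh D -> horosphere (centre D) x -> horosphere (centre D) x' ->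
  mink s (centre D) = 0 -> forall a, (a < 3)%N -> mink (newv D x' a) s = mink (newv D x a) s.
Proof.
move=> [[pp p0] [T [Pi [Pj [FF _]]]]] hx hx' sp.
have ti : forall y, horosphere (centre D) y -> mink (vi D y) (centre D) = 0.
  by move=> y hy; have [[_ ?] _] := T y hy.
have tj : forall y, horosphere (centre D) y -> mink (vj D y) (centre D) = 0.
  by move=> y hy; have [_ [[_ ?] _]] := T y hy.
have Hi : forall a, mink a (centre D) = 0 -> mink (vi D x') a = mink (vi D x) a.
  by move=> a ha; apply: (par_inv pp p0 Pi ti hx hx' ha).
have Hj : forall a, mink a (centre D) = 0 -> mink (vj D x') a = mink (vj D x) a.
  by move=> a ha; apply: (par_inv pp p0 Pj tj hx hx' ha).
case=> [_|[_|[_|//]]] /=; rewrite /newv /=; last first.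
- exact: (Hj s sp).
- exact: (Hi s sp).
have E4 : forall y, rowv (Fout D y) 4 = centre D - rowv (Fout D y) 0 by move=> y; rewrite !Fout_row.
have X1 : forall y, horosphere (centre D) y -> mink (rowv (Fout D y) 0) (centre D) = 1.
  by move=> y [_ ?]; rewrite Fout_row.
have := @v1_transport _ (Fout D x) (Fout D x') (centre D) (FF x hx) (FF x' hx') (E4 x) (E4 x')
   (X1 x hx) (X1 x' hx') pp.
rewrite !Fout_row //=; apply => //.
Qed.
End S_T12.

Section S_T13.
Variable R : realType.
Implicit Types x y z : vec R.

Lemma oldvF (D : sdh R) x s b : (b < 3)%N ->
  mink (oldv D x b) s = F3 (fun a => mink (newv D x a) s) b.
Proof. by case: b => [|[|[|b]]] // _; rewrite /oldv /F3 /newv /= ?minkNl. Qed.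

Lemma geod_nz (p1 p2 x : vec R) : mink p1 p1 = 0 -> mink p2 p2 = 0 -> on_geod p1 p2 x -> mink p1 p2 != 0.
Proof.
move=> h1 h2 [[hxx _] [a [b E]]].
apply/eqP => c0; move: hxx; rewrite E !minkDl !minkDr !minkZl !minkZr h1 h2 c0 (minkC p2) c0.
by rewrite !mulr0 !addr0 => /eqP; rewrite eq_sym oner_eq0.
Qed.

Lemma pair_eq (Dm Dn : sdh R) x y rho th v s (sig_n sig_m : nat -> R) :
  is_sdh Dn -> horosphere (centre Dn) y -> unit3 v ->
  homotopic (pconcat (pconcat (win Dm x) (transl_path (centre Dm) (centre Dn) rho (Fin Dm x)))
               (rot_path th v (mapframe (Lmap (centre Dm) (centre Dn) rho) (Fin Dm x))))
            (wout Dn y) ->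
  mink s (centre Dm) = 0 -> mink s (centre Dn) = 0 ->
  (forall a, (a < 3)%N -> mink (newv Dn y a) s = sig_n a) ->
  (forall a, (a < 3)%N -> mink (newv Dm x a) s = sig_m a) ->
  forall a, (a < 3)%N -> sig_n a = Rq (hq th v) 0 a * F3 sig_m 0 + Rq (hq th v) 1 a * F3 sig_m 1
                              + Rq (hq th v) 2 a * F3 sig_m 2.
Proof.
move=> sd hy uv hom s1 s2 En Em a ha.
rewrite -En // (endpoint sd hy hom s1 s2 ha) !oldvF // !rodE // /F3 /= !Em //.
Qed.

Theorem main (D1 D2 D3 : sdh R) (l12 l32 l31 : quat R) :
  is_sdh D1 -> is_sdh D2 -> is_sdh D3 ->
  is_lambda D1 D2 l12 -> is_lambda D3 D2 l32 -> is_lambda D3 D1 l31 ->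
  l32 <> qzero R ->
  inV (qmul (qmul l12 (qinv l32)) l31).
Proof.
move=> S1 S2 S3 L12 L32 L31 nz; rewrite /inV.
case: L12 => [[_ ->]|[_ [x12 [y12 [r1 [t1 [w1 [G12 [H12 [G12' [K12 [U1 [Hom1 ->]]]]]]]]]]]]].
  by rewrite /qmul /=; ring.
case: L31 => [[_ ->]|[_ [x31 [y31 [r3 [t3 [w3 [G31 [H31 [G31' [K31 [U3 [Hom3 ->]]]]]]]]]]]]].
  by rewrite /qmul /=; ring.
case: L32 => [[_ E]|[_ [x32 [y32 [r2 [t2 [w2 [G32 [H32 [G32' [K32 [U2 [Hom2 E]]]]]]]]]]]]].
  by rewrite E in nz.
rewrite E; apply: lam_prod.
have [s [snz [sp1 [sp2 sp3]]]] := exists_perp (centre D1) (centre D2) (centre D3).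
pose s1 := fun a => mink (newv D1 x12 a) s.
pose s2 := fun a => mink (newv D2 y12 a) s.
pose s3 := fun a => mink (newv D3 x32 a) s.
apply: (@quat_main _ _ _ _ s1 s2 s3 (hq_norm t1 U1) (hq_norm t2 U2) (hq_norm t3 U3)).
- exact: (pair_eq S2 K12 U1 Hom1 sp1 sp2).
- apply: (pair_eq S2 K32 U2 Hom2 sp3 sp2).
  + by move=> a ha; rewrite (transport S2 K12 K32 sp2 ha).
  + by [].
- apply: (pair_eq S1 K31 U3 Hom3 sp3 sp1).
  + by move=> a ha; rewrite (transport S1 H12 K31 sp1 ha).
  + by move=> a ha; rewrite (transport S3 H32 H31 sp3 ha).
- move=> [z0 [z1 z2]].
  have [[pp1 _] [_ [_ [_ [FF _]]]]] := S1.
  have [[pp2 _] _] := S2.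
  move/eqP: snz; apply.
  apply: (@sigma_nz _ (Fout D1 x12) (centre D1) (centre D2) s (FF x12 H12)).
  + by rewrite !Fout_row.
  + by [].
  + by [].
  + exact: geod_nz pp1 pp2 G12.
  + by rewrite Fout_row // minkC.
  + by rewrite Fout_row // minkC.
  + by rewrite Fout_row // minkC.
Qed.
End S_T13.


Unset Implicit Arguments.
Theorem proposition1p8 (R : realType) (D1 D2 D3 : sdh R) (l12 l32 l31 : quat R) :
  is_sdh D1 -> is_sdh D2 -> is_sdh D3 ->
  is_lambda D1 D2 l12 -> is_lambda D3 D2 l32 -> is_lambda D3 D1 l31 ->
  l32 <> qzero R ->
  inV (qmul (qmul l12 (qinv l32)) l31).
Proof.
exact: main.
Qed.
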